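(* Let $(a_n)$ be a strictly decreasing sequence of positive reals with $a_n\to0$ and $(b_n)$ positive reals such that $\phi_{ij}:=\frac{b_i/b_j}{1+a_i/a_j}\le C\mu^{|i-j|}$ for all $i,j\in\mathbb{N}$ and some $C>0$, $\mu\in(0,1)$. Then $(a_n/b_n)\in\ell^1$; more precisely, $\sum_{j}a_j/b_j\le\kappa\,(a_1+a_i)/b_i$ for every $i\in\mathbb{N}$, where $\kappa:=C\frac{1+\mu}{1-\mu}$. *)

(* Defs.v *)
From Stdlib Require Import Reals.
From Coquelicot Require Import Coquelicot.
Open Scope R_scope.

Definition natdist (i j : nat) : nat := (Nat.max i j - Nat.min i j)%nat.

Definition phi (a b : nat -> R) (i j : nat) : R :=
  (b i / b j) / (1 + a i / a j).

(* Main.v *)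
Require Import Defs.
From Stdlib Require Import Reals.
From Coquelicot Require Import Coquelicot.
From Stdlib Require Import Lra Lia.
Open Scope R_scope.

Lemma my_pow_le1 (mu : R) (n : nat) : 0 < mu < 1 -> mu ^ n <= 1.
Proof. intros H. induction n; simpl; [lra|]. assert (0 < mu ^ n) by (apply pow_lt; lra). nra. Qed.

Lemma le_div_helper (X Y d : R) : 0 < d -> X * d <= Y -> X <= Y / d.
Proof. intros Hd H. replace X with (X * d / d) by (field; lra).
  unfold Rdiv. apply Rmult_le_compat_r; [apply Rlt_le, Rinv_0_lt_compat; lra|lra]. Qed.

Lemma geom_part (mu : R) (N : nat) : 0 < mu < 1 ->
  sum_f_R0 (fun j => mu ^ j) N <= 1 / (1 - mu).
Proof.
  intros Hm. rewrite tech3 by lra.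
  assert (0 < mu ^ S N) by (apply pow_lt; lra).
  unfold Rdiv. apply Rmult_le_compat_r.
  - apply Rlt_le, Rinv_0_lt_compat; lra.
  - lra.
Qed.

Lemma dist_part (mu : R) (i : nat) : 0 < mu < 1 -> forall N,
  sum_f_R0 (fun j => mu ^ natdist i j) N <= (1 + mu - mu ^ (S i)) / (1 - mu).
Proof.
  intros Hm. induction i as [|i IH]; intros N.
  - apply (Rle_trans _ (sum_f_R0 (fun j => mu ^ j) N)).
    + apply Req_le. apply sum_eq. intros j _. f_equal. unfold natdist. lia.
    + eapply Rle_trans; [apply geom_part; lra|].
      simpl. apply Req_le. field. lra.
  - assert (Hp : 0 < mu ^ S i) by (apply pow_lt; lra).
    assert (Hp1 : mu ^ S i <= 1) by (apply my_pow_le1; lra).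
    assert (Hq : mu ^ S (S i) = mu * mu ^ S i) by reflexivity.
    destruct N as [|N].
    + simpl sum_f_R0. replace (natdist (S i) 0) with (S i) by (unfold natdist; lia).
      rewrite Hq. apply le_div_helper; [lra|]. change (mu * mu ^ i) with (mu ^ S i). nra.
    + rewrite decomp_sum by lia. simpl Init.Nat.pred.
      replace (natdist (S i) 0) with (S i) by (unfold natdist; lia).
      rewrite (sum_eq _ (fun j => mu ^ natdist i j));
        [| intros j _; f_equal; unfold natdist; lia].
      specialize (IH N).
      rewrite Hq. apply le_div_helper; [lra|].
      apply (Rmult_le_compat_r (1 - mu)) in IH; [|lra].
      replace ((1 + mu - mu ^ S i) / (1 - mu) * (1 - mu)) with (1 + mu - mu ^ S i) in IH
        by (field; lra).
      rewrite Rmult_plus_distr_r. lra.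
Qed.

Lemma term_bound (a b : nat -> R) (C mu : R)
  (ha_pos : forall n, 0 < a n)
  (ha_dec : forall n, a (S n) < a n)
  (hb_pos : forall n, 0 < b n)
  (hC : 0 < C) (hmu0 : 0 < mu)
  (hphi : forall i j, phi a b i j <= C * mu ^ (natdist i j)) :
  forall i j, a j / b j <= (C * ((a 0%nat + a i) / b i)) * mu ^ natdist i j.
Proof.
  intros i j.
  assert (Hle : forall n, a n <= a 0%nat).
  { induction n; [lra|]. specialize (ha_dec n). lra. }
  assert (Hai := ha_pos i). assert (Haj := ha_pos j).
  assert (Hbi := hb_pos i). assert (Hbj := hb_pos j).
  assert (E : a j / b j = phi a b i j * ((a i + a j) / b i)).
  { assert (0 < a i / a j) by (apply Rdiv_lt_0_compat; lra).
    unfold phi. field. repeat split; lra. }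
  rewrite E.
  assert (0 <= (a i + a j) / b i) by (apply Rlt_le, Rdiv_lt_0_compat; lra).
  eapply Rle_trans. { apply Rmult_le_compat_r; [assumption|apply hphi]. }
  assert (0 < mu ^ natdist i j) by (apply pow_lt; lra).
  assert ((a i + a j) / b i <= (a 0%nat + a i) / b i).
  { unfold Rdiv. apply Rmult_le_compat_r; [apply Rlt_le, Rinv_0_lt_compat; lra|].
    specialize (Hle j). lra. }
  assert (C * mu ^ natdist i j * ((a i + a j) / b i) <=
          C * mu ^ natdist i j * ((a 0%nat + a i) / b i)).
  { apply Rmult_le_compat_l; [|assumption]. nra. }
  lra.
Qed.

Theorem mainTheorem16 (a b : nat -> R) (C mu : R)
  (ha_pos : forall n, 0 < a n)
  (ha_dec : forall n, a (S n) < a n)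
  (ha_lim : is_lim_seq a 0)
  (hb_pos : forall n, 0 < b n)
  (hC : 0 < C) (hmu0 : 0 < mu) (hmu1 : mu < 1)
  (hphi : forall i j, phi a b i j <= C * mu ^ (natdist i j)) :
  ex_series (fun n => a n / b n) /\
  forall i, Series (fun n => a n / b n)
            <= (C * (1 + mu) / (1 - mu)) * ((a 0%nat + a i) / b i).
Proof.
  pose proof (term_bound a b C mu ha_pos ha_dec hb_pos hC hmu0 hphi) as TB.
  assert (Hex : ex_series (fun n => a n / b n)).
  { apply (@ex_series_le R_AbsRing R_CompleteNormedModule _ (fun n => scal (C * ((a 0%nat + a 0%nat) / b 0%nat)) (mu ^ n))).
    - intros n. change (norm (a n / b n)) with (Rabs (a n / b n)).
      rewrite Rabs_pos_eq.
      2:{ apply Rlt_le, Rdiv_lt_0_compat; auto. }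
      eapply Rle_trans; [apply (TB 0%nat n)|].
      apply Req_le. unfold scal; simpl; unfold mult; simpl. f_equal. f_equal.
      unfold natdist. lia.
    - apply (@ex_series_scal_l R_AbsRing R_NormedModule). apply ex_series_geom. rewrite Rabs_pos_eq; lra. }
  split; [exact Hex|]. intros i.
  set (K := C * ((a 0%nat + a i) / b i)).
  assert (HK : 0 < K).
  { unfold K. apply Rmult_lt_0_compat; auto.
    apply Rdiv_lt_0_compat; auto. pose proof (ha_pos 0%nat); pose proof (ha_pos i); lra. }
  assert (HP : forall N, sum_n (fun n => a n / b n) N <= K * ((1 + mu) / (1 - mu))).
  { intros N. rewrite sum_n_Reals.
    eapply Rle_trans. { apply sum_Rle. intros n _. apply (TB i n). }
    rewrite (sum_eq _ (fun n => mu ^ natdist i n * K)) by (intros; unfold K; ring).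
    rewrite <- scal_sum. apply Rmult_le_compat_l; [lra|].
    eapply Rle_trans; [apply (dist_part mu i); lra|].
    unfold Rdiv. apply Rmult_le_compat_r; [apply Rlt_le, Rinv_0_lt_compat; lra|].
    assert (0 < mu ^ S i) by (apply pow_lt; lra). lra. }
  assert (HS : is_lim_seq (sum_n (fun n => a n / b n)) (Series (fun n => a n / b n))).
  { pose proof (Series_correct _ Hex) as HS. exact HS. }
  pose proof (is_lim_seq_le _ (fun _ => K * ((1 + mu) / (1 - mu))) _ _ HP HS
    (is_lim_seq_const _)) as L.
  simpl in L. replace (C * (1 + mu) / (1 - mu) * ((a 0%nat + a i) / b i))
    with (K * ((1 + mu) / (1 - mu))) by (unfold K; pose proof (hb_pos i); field; lra). exact L.
Qed.
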